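(* For $0\le k\le n$, \[ q^{k^2}[2]_q^{k}\,S_B[n,k]=\sum_{\pi\in B_{\subseteq}([n],k)}q^{m(\pi)}. \]
   Context: $[k]_q=1+\dots+q^{k-1}$, $[0]_q=0$. $S_B[n,k]$ is defined by $S_B[0,k]=\delta_{0k}$ and $S_B[n,k]=S_B[n-1,k-1]+[2k+1]_qS_B[n-1,k]$ for $n\ge1$ (with $S_B[n-1,-1]=0$). For $S\subset\mathbb{Z}\setminus\{0\}$ and $\overline{S}=\{-i:i\in S\}$, a standard signed partition (SSP) of $S$ with $k$ blocks is a sequence $(S_1,\dots,S_k)$ of disjoint nonempty subsets of $S\cup\overline{S}$ such that $\{S_1,\dots,S_k,\overline{S_1},\dots,\overline{S_k}\}$ is a partition of $S\cup\overline{S}$ and $\min|S_1|\le\dots\le\min|S_k|$, where $|S_i|=\{|j|:j\in S_i\}$. A PSSP of $S$ is an SSP of a (possibly empty) subset of $S$; $B_{\subseteq}(S,k)$ is the set of PSSPs of $S$ with $k$ blocks. For $\pi=(S_1,\dots,S_k)$, $\mathrm{pos}(\pi)=\#\{x\in\bigcup_iS_i:x>0\}$ and $m(\pi)=2\sum_{i=1}^k i\cdot\#S_i-\mathrm{pos}(\pi)$. *)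

(* Defs.v *)
From mathcomp Require Import all_boot all_order all_algebra.
Set Implicit Arguments. Unset Strict Implicit. Unset Printing Implicit Defensive.
Import GRing.Theory.
Local Open Scope ring_scope.

Definition qint (R : comNzRingType) (q : R) (k : nat) : R := \sum_(i < k) q ^+ i.

Fixpoint SB (R : comNzRingType) (q : R) (n k : nat) : R :=
  match n with
  | 0 => (k == 0%N)%:R
  | n'.+1 => (if k is k'.+1 then SB q n' k' else 0) + qint q (2 * k + 1) * SB q n' k
  end.

(* Signed elements of [n] \cup \bar{[n]}: (i, true) stands for i+1 and
   (i, false) for -(i+1), for i : 'I_n. *)
Definition signed (n : nat) := ('I_n * bool)%type.

Definition sbar n (x : signed n) : signed n := (x.1, ~~ x.2).
Definition sabs n (x : signed n) : nat := (x.1).+1.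

Definition setbar n (A : {set signed n}) : {set signed n} := (@sbar n) @: A.

(* T \cup \bar T for T a subset of [n] *)
Definition symm n (T : {set 'I_n}) : {set signed n} := [set x | x.1 \in T].

(* min |A| (meaningful for A nonempty) *)
Definition minabs n (A : {set signed n}) : nat := \big[minn/n.+1]_(x in A) sabs x.

(* The 2k blocks S_1..S_k, \bar S_1..\bar S_k, indexed by 'I_k * bool
   ((i,true) = S_{i+1}, (i,false) = \bar S_{i+1}). *)
Definition blk n k (pi : {ffun 'I_k -> {set signed n}}) (j : 'I_k * bool)
  : {set signed n} := if j.2 then pi j.1 else setbar (pi j.1).

Definition is_SSP n k (T : {set 'I_n}) (pi : {ffun 'I_k -> {set signed n}}) : bool :=
  [&& [forall i, pi i != set0],
      [forall j1, forall j2, (j1 != j2) ==> [disjoint blk pi j1 & blk pi j2]],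
      \bigcup_(j : 'I_k * bool) blk pi j == symm T &
      [forall i : 'I_k, forall j : 'I_k, (i <= j)%N ==> (minabs (pi i) <= minabs (pi j))%N]].

Definition is_PSSP n k (pi : {ffun 'I_k -> {set signed n}}) : bool :=
  [exists T : {set 'I_n}, is_SSP T pi].

Definition pos n k (pi : {ffun 'I_k -> {set signed n}}) : nat :=
  #|[set x in \bigcup_(i : 'I_k) pi i | x.2]|.

(* m(pi) = 2 * sum_i i * #S_i - pos(pi)  (blocks numbered from 1; this is >= 0) *)
Definition mstat n k (pi : {ffun 'I_k -> {set signed n}}) : nat :=
  (2 * (\sum_(i : 'I_k) i.+1 * #|pi i|) - pos pi)%N.

(* Main.v *)
Require Import Defs.
From mathcomp Require Import all_boot all_order all_algebra.
From mathcomp Require Import zify ring.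
Set Implicit Arguments. Unset Strict Implicit. Unset Printing Implicit Defensive.
Import GRing.Theory.

Fixpoint seqs (n k : nat) : seq (seq nat) :=
  match n with
  | 0 => if k is 0 then [:: [::]] else [::]
  | n'.+1 => [seq rcons s c | s <- seqs n' k, c <- iota 0 (2*k+1)] ++
             (if k is k'.+1 then [seq rcons s c | s <- seqs n' k', c <- [:: (2*k'+1)%N; (2*k'+2)%N]] else [::])
  end.


Definition blkc (c : nat) := (c.-1 %/ 2)%N.

Definition VD (s : seq nat) (k : nat) : Prop :=
  [/\ forall a, a < size s -> 0 < nth 0 s a -> blkc (nth 0 s a) < k,
      forall j, j < k -> exists2 a, a < size s & (0 < nth 0 s a) && (blkc (nth 0 s a) == j)
    & forall a, a < size s -> 0 < nth 0 s a -> forall j, j < blkc (nth 0 s a) ->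
        exists2 a', a' < a & (0 < nth 0 s a') && (blkc (nth 0 s a') == j)].

Lemma VD_rcons s c k : VD (rcons s c) k <->
  (VD s k /\ c <= 2 * k) \/ (exists2 k', k = k'.+1 & VD s k' /\ ((c == 2 * k' + 1) || (c == 2 * k' + 2))).
Proof.
set m := size s.
have nthr a : nth 0 (rcons s c) a = if a < m then nth 0 s a else if a == m then c else 0.
  by rewrite nth_rcons.
have szr : size (rcons s c) = m.+1 by rewrite size_rcons.
split.
- case=> V1 V2 V3.
  have V3' : forall a, a < m -> 0 < nth 0 s a -> forall j, j < blkc (nth 0 s a) ->
        exists2 a', a' < a & (0 < nth 0 s a') && (blkc (nth 0 s a') == j).
    move=> a am ca j jl.
    have := V3 a; rewrite szr nthr am => /(_ (ltnW am) ca j jl) [a' a'a H].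
    by exists a' => //; move: H; rewrite nthr (ltn_trans a'a am).
  have V1' : forall a, a < m -> 0 < nth 0 s a -> blkc (nth 0 s a) < k.
    by move=> a am; have := V1 a; rewrite szr nthr am; apply; apply: ltnW.
  case: k V1 V2 V3 V1' => [|k'] V1 V2 V3 V1'.
    left; split; last first.
      case: (posnP c) => [->//|cp]; have := V1 m; rewrite szr nthr ltnn eqxx.
      by move=> /(_ (ltnSn _) cp).
    split; [by move=> a am /(V1' a am) | by [] | exact: V3'].
  case: (boolP (has (fun a => (0 < nth 0 s a) && (blkc (nth 0 s a) == k')) (iota 0 m))).
  + move/hasP => [a0]; rewrite mem_iota add0n => /= a0m /andP[ca0 /eqP ba0].
    left; split; last first.
      case: (posnP c) => [->//|cp]; have := V1 m; rewrite szr nthr ltnn eqxx.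
      move=> /(_ (ltnSn _) cp); rewrite /blkc; lia.
    split => // j jk.
    case: (ltngtP j k') => [jk'|kj|->].
    * have := V3' a0 a0m ca0 j; rewrite ba0 => /(_ jk') [a' a'a0 H].
      by exists a' => //; apply: ltn_trans a'a0 a0m.
    * by move: jk kj; lia.
    * by exists a0 => //; rewrite ca0 ba0 eqxx.
  + move/hasPn => Hn.
    have [a am /andP[ca /eqP ba]] := V2 k' (ltnSn _).
    have am' : a = m.
      case: (ltngtP a m) => // [alt|]; last by move: am; rewrite szr; lia.
      move: ca ba; rewrite nthr alt => ca ba.
      by have := Hn a; rewrite mem_iota add0n alt /= ca ba eqxx => /(_ isT).
    move: ca ba; rewrite am' nthr ltnn eqxx => cp bc.
    right; exists k' => //; split; last by move: bc; rewrite /blkc; lia.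
    split => //.
    * move=> a1 a1m ca1; have := V1' a1 a1m ca1.
      have := Hn a1; rewrite mem_iota add0n a1m => /(_ isT) /=; rewrite ca1 /=; lia.
    * move=> j jk.
      have := V3 m; rewrite szr nthr ltnn eqxx => /(_ (ltnSn _) cp j); rewrite bc.
      move=> /(_ jk) [a' a'm H]; exists a' => //; move: H; by rewrite nthr a'm.
- have aux : forall (P : nat -> Prop), (forall a, a < m -> P a) -> P m -> forall a, a < size (rcons s c) -> P a.
    move=> P H1 H2 a; rewrite szr ltnS leq_eqVlt => /orP[/eqP->//|]; exact: H1.
  case=> [[[V1 V2 V3] ck] | [k' -> [[V1 V2 V3] ck]]].
  + split.
    * apply: aux; first by move=> a am; rewrite nthr am; exact: V1.
      rewrite nthr ltnn eqxx /blkc => cp; lia.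
    * move=> j /V2 [a am H]; exists a; first by rewrite szr ltnS ltnW.
      by rewrite nthr am.
    * apply: aux.
        move=> a am; rewrite nthr am => ca j jl.
        have [a' a'a H] := V3 a am ca j jl.
        by exists a' => //; rewrite nthr (ltn_trans a'a am).
      rewrite nthr ltnn eqxx => cp j jl.
      have [a am H] : exists2 a, a < m & (0 < nth 0 s a) && (blkc (nth 0 s a) == j) by apply: V2; move: jl ck; rewrite /blkc; lia.
      by exists a => //; rewrite nthr am.
  + have bc : blkc c = k' by move: ck; rewrite /blkc; lia.
    have cp : 0 < c by move: ck; lia.
    split.
    * apply: aux; first by move=> a am; rewrite nthr am => ca; have := V1 a am ca; lia.
      by rewrite nthr ltnn eqxx bc.
    * move=> j; rewrite ltnS leq_eqVlt => /orP[/eqP->|/V2 [a am H]].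
        by exists m; rewrite ?szr // nthr ltnn eqxx cp bc eqxx.
      by exists a; [rewrite szr ltnS ltnW | rewrite nthr am].
    * apply: aux.
        move=> a am; rewrite nthr am => ca j jl.
        have [a' a'a H] := V3 a am ca j jl.
        by exists a' => //; rewrite nthr (ltn_trans a'a am).
      rewrite nthr ltnn eqxx bc => _ j jl.
      have [a am H] := V2 j jl.
      by exists a => //; rewrite nthr am.
Qed.

Lemma VD_uniqk s k k' : VD s k -> VD s k' -> k = k'.
Proof.
wlog: k k' / k <= k'.
  move=> H V V'; case: (leqP k k') => [le|/ltnW le]; first exact: H.
  by apply/esym; apply: H.
move=> le [V1 _ _] [_ V2 _]; apply/eqP; rewrite eqn_leq le /= leqNgt; apply/negP => lt.
have [a am /andP[ca /eqP ba]] := V2 k lt.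
by have := V1 a am ca; rewrite ba ltnn.
Qed.

Lemma seqsS n k : seqs n.+1 k = [seq rcons s c | s <- seqs n k, c <- iota 0 (2*k+1)] ++
             (if k is k'.+1 then [seq rcons s c | s <- seqs n k', c <- [:: (2*k'+1)%N; (2*k'+2)%N]] else [::]).
Proof. by []. Qed.

Lemma VD_nil k : VD [::] k -> k = 0.
Proof. by case: k => // k [_ /(_ 0 isT) [a]]. Qed.

Lemma mem_seqs n k s : (s \in seqs n k) <-> (size s = n /\ VD s k).
Proof.
elim: n k s => [|n IH] k s.
  split.
    case: k => [|k]; last by rewrite /= in_nil.
    rewrite /= inE => /eqP ->; split => //.
  case=> sz V; move: V; rewrite (size0nil sz) => V; by rewrite (VD_nil V) /= inE.
case/lastP: s => [|s c].
  split; last by case.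
  rewrite seqsS mem_cat => /orP[/allpairsP [[x y] [_ _ /= H]]|].
    by move: H; case: x.
  case: k => // k /allpairsP [[x y] [_ _ /= H]]. by move: H; case: x.
rewrite VD_rcons size_rcons seqsS mem_cat; split.
- case/orP.
  + move/allpairsP => [[x y] [/= /IH [sz V] yin /= /rcons_inj [-> ->]]].
    split; first by rewrite sz.
    by left; split => //; move: yin; rewrite mem_iota; lia.
  + case: k => // k /allpairsP [[x y] [/= /IH [sz V] yin /= /rcons_inj [-> ->]]].
    split; first by rewrite sz.
    right; exists k => //; split => //; move: yin; rewrite !inE.
    by case/orP => /eqP ->; rewrite eqxx ?orbT.
- case=> [[sz]] [[V ck]|[k' -> [V ck]]].
  + apply/orP; left; apply/allpairsP; exists (s, c) => /=; split => //.
      by apply/IH; split => //; lia.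
    by rewrite mem_iota; lia.
  + apply/orP; right; apply/allpairsP; exists (s, c) => /=; split => //.
      by apply/IH; split => //; lia.
    by rewrite !inE.
Qed.

Lemma uniq_seqs n k : uniq (seqs n k).
Proof.
elim: n k => [|n IH] k; first by case: k.
rewrite seqsS cat_uniq; apply/and3P; split.
- apply: allpairs_uniq_dep => //; first by move=> x _; exact: iota_uniq.
  by move=> [x1 y1] [x2 y2] _ _ /= /rcons_inj [-> ->].
- case: k => [|k]; first by [].
  apply/hasPn => z /allpairsP [[x y] [/mem_seqs [_ V] _ ->]].
  apply/negP => /allpairsP [[x' y'] [/mem_seqs [_ V'] _ /rcons_inj [ex _]]].
  by move: V'; rewrite -ex => /(VD_uniqk V); lia.
- case: k => [|k] //.
  apply: allpairs_uniq_dep => //; first by move=> x _; rewrite /= inE; lia.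
  by move=> [x1 y1] [x2 y2] _ _ /= /rcons_inj [-> ->].
Qed.

Definition cd (i : nat) (b : bool) : nat := if b then 2 * i + 1 else 2 * i + 2.

Lemma cd_inj i b i' b' : cd i b = cd i' b' -> i = i' /\ b = b'.
Proof. by case: b; case: b'; rewrite /cd => /= H; split => //; lia. Qed.

Lemma cd_pos i b : 0 < cd i b. Proof. by case: b; rewrite /cd; lia. Qed.

Lemma blkc_cd i b : blkc (cd i b) = i. Proof. by case: b; rewrite /cd /blkc; lia. Qed.

Lemma cd_blkc c : 0 < c -> cd (blkc c) (odd c) = c.
Proof.
move=> cp; have := odd_double_half c; rewrite -muln2 /cd /blkc.
by case: (odd c) => /= E; lia.
Qed.

Lemma setbarE n (A : {set signed n}) x : (x \in setbar A) = (sbar x \in A).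
Proof.
have sbK : forall y : signed n, sbar (sbar y) = y by case=> a b; rewrite /sbar /= negbK.
apply/imsetP/idP => [[y yA ->]|xA]; first by rewrite sbK.
by exists (sbar x); rewrite ?sbK.
Qed.

Section Enc.
Variables n k : nat.
Implicit Types pi : {ffun 'I_k -> {set signed n}}.

Definition code pi (a : 'I_n) : nat :=
  if [pick i | (a, true) \in pi i] is Some i then cd i true
  else if [pick i | (a, false) \in pi i] is Some i then cd i false else 0.

Definition enc pi : seq nat := [seq code pi a | a <- enum 'I_n].

Definition dec (s : seq nat) : {ffun 'I_k -> {set signed n}} :=
  [ffun i : 'I_k => [set x : signed n | nth 0 s x.1 == cd i x.2]].

Lemma size_enc pi : size (enc pi) = n.
Proof. by rewrite size_map size_enum_ord. Qed.

Lemma nth_enc pi a (H : a < n) : nth 0 (enc pi) a = code pi (Ordinal H).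
Proof.
by rewrite (nth_map (Ordinal H)) ?size_enum_ord // (nth_ord_enum (Ordinal H) (Ordinal H)).
Qed.

Lemma code_cases pi a :
  (code pi a = 0 /\ forall i b, (a, b) \notin pi i) \/
  (exists i : 'I_k, exists b, code pi a = cd i b /\ (a, b) \in pi i).
Proof.
rewrite /code; case: pickP => [i Hi|Hn1]; first by right; exists i, true.
case: pickP => [i Hi|Hn2]; first by right; exists i, false.
left; split => // i [] /=; [by rewrite Hn1 | by rewrite Hn2].
Qed.

Lemma SSP_disj T pi : is_SSP T pi -> forall j1 j2 x, x \in blk pi j1 -> x \in blk pi j2 -> j1 = j2.
Proof.
case/and4P => _ /forallP H _ _ j1 j2 x x1 x2.
apply/eqP; apply: contraT => ne.
have := H j1 => /forallP /(_ j2) /implyP /(_ ne) D.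
by rewrite (disjointFr D x1) in x2.
Qed.

Lemma SSP_uniq T pi : is_SSP T pi -> forall a b b' i i',
  (a, b) \in pi i -> (a, b') \in pi i' -> i = i' /\ b = b'.
Proof.
move=> S a b b' i i' H1 H2.
case: (boolP (b == b')) => [/eqP eb|nb].
  rewrite -eb in H2 *; split => //.
  by have := SSP_disj S (j1 := (i, true)) (j2 := (i', true)) H1 H2 => -[].
have H3 : (a, b') \in blk pi (i, false).
  rewrite /blk /= setbarE /sbar /=.
  by move: nb H1 H2; case: b; case: b'.
by have := SSP_disj S (j1 := (i', true)) (j2 := (i, false)) H2 H3.
Qed.

Definition P pi := is_PSSP pi.

Lemma code_spec pi : P pi -> forall a i b, ((a, b) \in pi i) = (code pi a == cd i b).
Proof.
case/existsP => T S a i b.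
case: (code_cases pi a) => [[-> Hn]|[i0 [b0 [-> H0]]]].
  by rewrite (negbTE (Hn i b)) eq_sym eqn0Ngt cd_pos.
apply/idP/eqP => [H|/cd_inj [/val_inj <- <-] //].
by have [-> ->] := SSP_uniq S H0 H.
Qed.

Lemma dec_enc pi : P pi -> dec (enc pi) = pi.
Proof.
move=> Ppi; apply/ffunP => i; apply/setP => -[a b].
by rewrite ffunE inE /= nth_enc code_spec //; congr (code _ _ == _); apply: val_inj.
Qed.

End Enc.

Section Min.
Variable n : nat.
Implicit Types A : {set signed n}.

Lemma bigmin_le_seq (I : eqType) (r : seq I) (P : pred I) (F : I -> nat) i0 x :
  x \in r -> P x -> \big[minn/i0]_(y <- r | P y) F y <= F x.
Proof.
elim: r => // y r IH; rewrite inE big_cons => /orP[/eqP <- ->|xr Px].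
  by rewrite geq_minl.
case: (P y); last exact: IH.
by rewrite geq_min IH // orbT.
Qed.

Lemma minabs_le A x : x \in A -> minabs A <= sabs x.
Proof. by move=> xA; rewrite /minabs; apply: bigmin_le_seq => //; rewrite mem_index_enum. Qed.

Lemma minabs_geq A m : m <= n.+1 -> (forall x, x \in A -> m <= sabs x) -> m <= minabs A.
Proof.
move=> mn H; rewrite /minabs; elim/big_ind: _ => //.
by move=> u v mu mv; rewrite leq_min mu mv.
Qed.

Lemma minabs_wit A x0 : x0 \in A -> exists2 x, x \in A & minabs A = sabs x.
Proof.
move=> x0A.
have : (minabs A == n.+1) || [exists x in A, minabs A == sabs x].
  rewrite /minabs; elim/big_ind: _ => [|u v Hu Hv|x xA]; first by rewrite eqxx.
    by rewrite /minn; case: ifP.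
  by apply/orP; right; apply/existsP; exists x; rewrite xA eqxx.
case/orP => [/eqP E|/existsP [x /andP[xA /eqP E]]]; last by exists x.
have := minabs_le x0A; rewrite E /sabs; have := ltn_ord x0.1 => H1 H2; by rewrite ltnS leqNgt H1 in H2.
Qed.
End Min.

Section F.
Variables n k : nat.
Implicit Types pi : {ffun 'I_k -> {set signed n}}.

Lemma VD_enc pi : P pi -> VD (enc pi) k.
Proof.
move=> Ppi; have := Ppi => /existsP [T S].
have := S => /and4P [/forallP Hne _ _ /forallP Hmon].
have cs := code_spec Ppi.
split.
- move=> a; rewrite size_enc => an; rewrite nth_enc.
  case: (code_cases pi (Ordinal an)) => [[-> //]|[i [b [-> _]]]].
  by rewrite blkc_cd.
- move=> j jk; have := Hne (Ordinal jk) => /set0Pn [[a b] xin].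
  exists a; first by rewrite size_enc.
  rewrite nth_enc; move: xin; rewrite cs => /eqP.
  have -> : Ordinal (ltn_ord a) = a by apply: val_inj.
  by move=> ->; rewrite cd_pos blkc_cd /= eqxx.
- move=> a; rewrite size_enc => an; rewrite nth_enc.
  case: (code_cases pi (Ordinal an)) => [[-> //]|[i [b [-> H]]]].
  rewrite blkc_cd => _ j ji.
  have jk : j < k by apply: ltn_trans ji (ltn_ord i).
  have := Hne (Ordinal jk) => /set0Pn [x0 x0in].
  have [x xin E] := minabs_wit x0in.
  have := Hmon (Ordinal jk) => /forallP /(_ i) /implyP /(_ (ltnW ji)) M.
  have := minabs_le H; rewrite /sabs /= => M2.
  have xa : x.1 <= a.
    by move: M M2; rewrite E /sabs => M M2; have := leq_trans M M2.
  have xa' : (x.1 : nat) != a.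
    apply/negP => /eqP xe.
    have xe' : x = (Ordinal an, x.2) by case: x xe {E xa xin} => [[xx xp] xb] /= xe; congr (_, _); apply: val_inj.
    rewrite xe' in xin.
    have [ij _] := SSP_uniq S xin H.
    by move: ji; rewrite -ij /= ltnn.
  exists x.1; first by rewrite ltn_neqAle xa' xa.
  rewrite nth_enc; have -> : Ordinal (ltn_ord x.1) = x.1 by apply: val_inj.
  have := cs x.1 (Ordinal jk) x.2; rewrite -surjective_pairing xin => /esym /eqP ->.
  by rewrite cd_pos blkc_cd eqxx.
Qed.


Lemma dec_mem (s : seq nat) i x : (x \in dec n k s i) = (nth 0 s x.1 == cd i x.2).
Proof. by rewrite ffunE inE. Qed.

Lemma blk_dec (s : seq nat) j x :
  (x \in blk (dec n k s) j) = (nth 0 s x.1 == cd j.1 (if j.2 then x.2 else ~~ x.2)).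
Proof.
rewrite /blk; case: j => i [] /=; first by rewrite dec_mem.
by rewrite setbarE dec_mem.
Qed.

Lemma P_dec (s : seq nat) : size s = n -> VD s k -> P (dec n k s) /\ enc (dec n k s) = s.
Proof.
move=> sz [V1 V2 V3].
have mem_pos : forall (a : 'I_n), 0 < nth 0 s a -> forall i : 'I_k, i = blkc (nth 0 s a) :> nat ->
    (a, odd (nth 0 s a)) \in dec n k s i.
  by move=> a ca i ie; rewrite dec_mem /= ie cd_blkc.
split.
- apply/existsP; exists [set a : 'I_n | 0 < nth 0 s a].
  apply/and4P; split.
  + apply/forallP => i; have [a an /andP[ca /eqP ba]] := V2 i (ltn_ord i).
    rewrite sz in an; apply/set0Pn; exists (Ordinal an, odd (nth 0 s a)).
    by apply: mem_pos => //.
  + apply/forallP => j1; apply/forallP => j2; apply/implyP => ne.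
    rewrite disjoint_subset; apply/subsetP => x; rewrite blk_dec => /eqP E1.
    rewrite inE; apply/negP; rewrite blk_dec E1 => /eqP /cd_inj [e1 e2].
    move: ne; case: j1 e1 e2 E1 => [i1 b1]; case: j2 => [i2 b2] /= e1 e2.
    move=> _.
    have -> : i1 = i2 by apply: val_inj.
    by move: e2; case: b1; case: b2; case: (x.2); rewrite ?eqxx.
  + apply/eqP/setP => x; rewrite /symm !inE; apply/bigcupP/idP.
    * by move=> [j _]; rewrite blk_dec => /eqP ->; rewrite cd_pos.
    * move=> cp.
      have bk : blkc (nth 0 s x.1) < k by apply: V1; rewrite ?sz.
      exists (Ordinal bk, x.2 == odd (nth 0 s x.1)) => //.
      rewrite blk_dec /=.
      have -> : (if x.2 == odd (nth 0 s x.1) then x.2 else ~~ x.2) = odd (nth 0 s x.1).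
        by case: (x.2); case: (odd _).
      by rewrite cd_blkc.
  + apply/forallP => i; apply/forallP => j; apply/implyP => ij.
    case: (eqVneq i j) => [-> //|ne].
    have lt : i < j by rewrite ltn_neqAle ij andbT; apply: contra ne => /eqP e; apply/eqP/val_inj.
    apply: minabs_geq.
      have := V2 i (ltn_ord i) => -[a an /andP[ca /eqP ba]].
      rewrite sz in an.
      apply: leq_trans (minabs_le (mem_pos (Ordinal an) ca i (esym ba))) _.
      by rewrite /sabs /= ltnW // ltnS ltnW.
    move=> x; rewrite dec_mem => /eqP E.
    have x1n : x.1 < size s by rewrite sz.
    have cp : 0 < nth 0 s x.1 by rewrite E cd_pos.
    have := V3 x.1 x1n cp i; rewrite E blkc_cd => /(_ lt) [a' a'x /andP[ca' /eqP ba']].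
    have a'n : a' < n by apply: ltn_trans a'x (ltn_ord _).
    apply: leq_trans (minabs_le (mem_pos (Ordinal a'n) ca' i (esym ba'))) _.
    by rewrite /sabs /= ltnS ltnW.
- apply: (@eq_from_nth _ 0); first by rewrite size_enc sz.
  move=> a; rewrite size_enc => an; rewrite nth_enc.
  case: (code_cases (dec n k s) (Ordinal an)) => [[-> Hn]|[i [b [-> H]]]].
    case: (posnP (nth 0 s a)) => [//|ca].
    have bk : blkc (nth 0 s a) < k by apply: V1; rewrite ?sz.
    by have := Hn (Ordinal bk) (odd (nth 0 s a)); rewrite (mem_pos (Ordinal an)).
  by move: H; rewrite dec_mem /= => /eqP ->.
Qed.

End F.

Lemma sum_uniq (I : finType) (Pp : pred I) (G : I -> nat) i0 :
  (forall i, Pp i -> i = i0) -> \sum_i Pp i * G i = Pp i0 * G i0.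
Proof.
move=> H; rewrite (bigD1 i0) //= big1 ?addn0 // => i ne.
case: (boolP (Pp i)) => Pi //; by rewrite (H i Pi) eqxx in ne.
Qed.

Lemma card_sum (T : finType) (A : {pred T}) : #|A| = \sum_x (x \in A).
Proof. by rewrite -sum1_card big_mkcond; apply: eq_bigr => x _; case: (x \in A). Qed.

Section G.
Variables n k : nat.
Implicit Types pi : {ffun 'I_k -> {set signed n}}.

Lemma mstat_enc pi : P pi -> mstat pi = sumn (enc pi).
Proof.
move=> Ppi; have [T S] := existsP Ppi.
pose W := fun x : signed n => \sum_(i : 'I_k) (x \in pi i) * cd i x.2.
have HS : sumn (enc pi) = \sum_(x : signed n) W x.
  rewrite /enc sumnE big_map big_enum /=.
  transitivity (\sum_(a : 'I_n) \sum_(b : bool) W (a, b)); last first.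
    by rewrite pair_big /=; apply: eq_bigr => -[a b] _.
  apply: eq_bigr => a _; rewrite big_bool /W /=.
  case: (code_cases pi a) => [[-> Hn]|[i0 [b0 [-> H0]]]].
    by rewrite !big1 // => i _; rewrite (negbTE (Hn _ _)).
  have U : forall b, \sum_(i : 'I_k) ((a, b) \in pi i) * cd i b = ((a, b) \in pi i0) * cd i0 b.
    by move=> b; apply: sum_uniq => i Hi; have [-> _] := SSP_uniq S Hi H0.
  rewrite !U.
  case: b0 H0 => H0; rewrite H0.
    rewrite mul1n; case: (boolP (_ \in pi i0)) => H1; last by rewrite addn0.
    by have [_] := SSP_uniq S H0 H1.
  rewrite mul1n; case: (boolP (_ \in pi i0)) => H1; last by rewrite add0n.
  by have [_] := SSP_uniq S H0 H1.
have HP : pos pi = \sum_(x : signed n) \sum_(i : 'I_k) (x \in pi i) * x.2.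
  rewrite /pos card_sum; apply: eq_bigr => x _; rewrite inE.
  case: (boolP [exists i, x \in pi i]) => [/existsP [i0 H0]|Hn].
    rewrite (@sum_uniq _ _ _ i0); last first.
      move=> i Hi; move: Hi H0; rewrite [x]surjective_pairing => Hi H0.
      by have [-> _] := SSP_uniq S Hi H0.
    by rewrite H0 mul1n; have -> // : x \in \bigcup_i pi i by apply/bigcupP; exists i0.
  rewrite [X in _ = X]big1; last first.
    move=> i _; case: (boolP (x \in pi i)) => Hi.
      by move/negP: Hn; case; apply/existsP; exists i.
    by [].
  case: (boolP (x \in \bigcup_(j < k) pi j)) => Hu; last by [].
  case/bigcupP: Hu => j _ Hj.
  by move/negP: Hn; case; apply/existsP; exists j.
have E2 : 2 * (\sum_(i : 'I_k) i.+1 * #|pi i|) = \sum_x W x + pos pi.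
  rewrite HP -big_split /= big_distrr /=.
  transitivity (\sum_(i : 'I_k) \sum_(x : signed n) (x \in pi i) * (2 * i.+1)).
    apply: eq_bigr => i _; rewrite card_sum !big_distrr /=; apply: eq_bigr => x _; lia.
  rewrite exchange_big /=; apply: eq_bigr => x _.
  rewrite /W -big_split /=; apply: eq_bigr => i _.
  by case: (x.2); case: (x \in pi i); rewrite /cd /=; lia.
rewrite /mstat E2 addnK HS //.
Qed.

End G.

Local Open Scope ring_scope.

Lemma sum_iota (R : comNzRingType) (q : R) m : \sum_(c <- iota 0 m) q ^+ c = qint q m.
Proof. by rewrite /qint -(big_mkord xpredT (fun i => q ^+ i)) /index_iota subn0. Qed.

Lemma G_SB (R : comNzRingType) (q : R) n k :
  \sum_(s <- seqs n k) q ^+ sumn s = q ^+ (k ^ 2) * qint q 2 ^+ k * SB q n k.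
Proof.
elim: n k => [|n IH] k.
  case: k => [|k] /=; first by rewrite big_seq1 /= expr0 !mulr1.
  by rewrite big_nil /= mulr0.
rewrite /= big_cat big_allpairs_dep /=.
have E1 : \sum_(s <- seqs n k) \sum_(c <- iota 0 (2 * k + 1)) q ^+ sumn (rcons s c)
   = qint q (2*k+1) * \sum_(s <- seqs n k) q ^+ sumn s.
  rewrite mulr_sumr; apply: eq_bigr => s _.
  rewrite -sum_iota mulr_suml; apply: eq_bigr => c _.
  by rewrite sumn_rcons exprD mulrC.
rewrite E1 IH.
case: k IH E1 => [|k] IH E1.
  by rewrite big_nil addr0 (_ : (0^2 = 0)%N) // !expr0 !mul1r add0r.
rewrite big_flatten big_map.
have E2 : \sum_(s <- seqs n k) \sum_(i <- [:: rcons s (2 * k + 1)%N; rcons s (2 * k + 2)%N]) q ^+ sumn i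
  = (\sum_(s <- seqs n k) q ^+ sumn s) * (q ^+ (2 * k + 1) + q ^+ (2*k+2)).
  rewrite mulr_suml; apply: eq_bigr => s _.
  by rewrite big_cons big_seq1 !sumn_rcons !exprD mulrDr.
have Q2 : qint q 2 = 1 + q by rewrite /qint big_ord_recr big_ord1 /= expr0 expr1.
rewrite E2 IH Q2.
have -> : ((k.+1) ^ 2 = k ^ 2 + 2 * k + 1)%N by lia.
have -> : (2 * k + 2 = 2 * k + 1 + 1)%N by lia.
rewrite !exprD !expr1 !exprS. ring.
Qed.

Theorem proposition3p2 (R : comNzRingType) (q : R) (n k : nat) :
  (k <= n)%N ->
  q ^+ (k ^ 2) * qint q 2 ^+ k * SB q n k
  = \sum_(pi : {ffun 'I_k -> {set signed n}} | is_PSSP pi) q ^+ mstat pi.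
Proof.
move=> _; rewrite -G_SB.
rewrite (eq_bigr (fun pi => q ^+ sumn (enc pi))); last by move=> pi Ppi; rewrite mstat_enc.
rewrite -big_filter -(big_map (@enc n k) xpredT (fun s => q ^+ sumn s)).
apply: perm_big; apply: uniq_perm.
- exact: uniq_seqs.
- rewrite map_inj_in_uniq ?filter_uniq ?index_enum_uniq //.
  move=> x y; rewrite !mem_filter => /andP[Px _] /andP[Py _] E.
  by rewrite -(dec_enc Px) -(dec_enc Py) E.
- move=> s; apply/idP/mapP.
  + move/mem_seqs => [sz V]; have [Pd Ed] := P_dec sz V.
    exists (dec n k s); rewrite ?Ed // mem_filter; apply/andP; split; [exact: Pd | exact: mem_index_enum].
  + move=> [pi]; rewrite mem_filter => /andP[Ppi _] ->.
    by apply/mem_seqs; split; [exact: size_enc | exact: VD_enc].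
Qed.
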